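(* Let $k$ be a field, $Q=k[[y_1,\dots,y_{d+1}]]$ with maximal ideal $\mathfrak{n}$, and let $M$ be a $Q$-module with a minimal presentation $0\to Q^n\xrightarrow{\phi}Q^n\to M\to0$. Write $\phi=\sum_{i\ge i(M)}\phi_i$, where $\phi_i$ is the $n\times n$ matrix of the degree-$i$ homogeneous components of the entries of $\phi$. Then $\det\phi_{i(M)}\neq0$ if and only if $h_M(z)=\mu(M)(1+z+\cdots+z^{i(M)-1})$.
   Context: $i(M)=\max\{i:\text{all entries of }\phi\text{ lie in }\mathfrak{n}^i\}$. The Hilbert series $\sum_n\lambda(\mathfrak{n}^nM/\mathfrak{n}^{n+1}M)z^n=h_M(z)/(1-z)^{\dim M}$ with $h_M\in\mathbb{Z}[z]$. $\mu(M)$ is the minimal number of generators. *)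

(* Defs.v *)
From HB Require Import structures.
From mathcomp Require Import all_boot all_order all_algebra.
From mathcomp Require Import mpoly.
Set Implicit Arguments. Unset Strict Implicit. Unset Printing Implicit Defensive.
Import Order.TTheory GRing.Theory Num.Theory.
Local Open Scope ring_scope.

(* Formal power series ring Q = k[[y_1, ..., y_{d+1}]], encoded by the       *)
(* sequence of homogeneous components: a power series f is a function        *)
(* f : nat -> {mpoly k[d.+1]} with f a homogeneous of degree a, standing for  *)
(* f = \sum_a f a.                                                          *)

Section PS.
Variables (k : fieldType) (d : nat).

Definition mp := {mpoly k[d.+1]}.
Definition ps := nat -> mp.

Definition homog_of (a : nat) (p : mp) : Prop :=
  forall m : 'X_{1..d.+1}, mdeg m != a -> p@_m = 0.

Definition is_ps (f : ps) : Prop := forall a, homog_of a (f a).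

Definition ps_eq (f g : ps) : Prop := forall a, f a = g a.

Definition ps_add (f g : ps) : ps := fun a => f a + g a.
Definition ps_mul (f g : ps) : ps :=
  fun a => \sum_(b < a.+1) f b * g (a - b)%N.
Definition ps_scale (c : k) (f : ps) : ps := fun a => c *: f a.

(* f \in n^j where n = (y_1, ..., y_{d+1}) is the maximal ideal of Q *)
Definition in_maxpow (j : nat) (f : ps) : Prop := forall a, (a < j)%N -> f a = 0.

Definition psvec (n : nat) := 'I_n -> ps.
Definition psmat (n : nat) := 'I_n -> 'I_n -> ps.

Definition is_psvec n (v : psvec n) : Prop := forall c, is_ps (v c).
Definition is_psmat n (phi : psmat n) : Prop := forall r c, is_ps (phi r c).

Definition mat_apply n (phi : psmat n) (x : psvec n) : psvec n :=
  fun r a => \sum_(c < n) ps_mul (phi r c) (x c) a.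

Definition ps_injective n (phi : psmat n) : Prop :=
  forall x : psvec n, is_psvec x ->
    (forall r, ps_eq (mat_apply phi x r) (fun _ => 0)) ->
    forall c, ps_eq (x c) (fun _ => 0).

(* the presentation is minimal: all entries of phi lie in n *)
Definition minimal_pres n (phi : psmat n) : Prop :=
  forall r c, in_maxpow 1 (phi r c).

Definition hcomp n (phi : psmat n) (i : nat) : 'M[mp]_n :=
  \matrix_(r, c) phi r c i.

Definition all_in_maxpow n (phi : psmat n) (i : nat) : Prop :=
  forall r c, in_maxpow i (phi r c).
Definition is_iM n (phi : psmat n) (i : nat) : Prop :=
  all_in_maxpow phi i /\ forall j, all_in_maxpow phi j -> (j <= i)%N.

(* mu(M): minimal number of generators of M.  v_1..v_m in Q^n generate M iff *)
(* every w in Q^n is  \sum_l a_l v_l + phi x  for some a_l in Q, x in Q^n.   *)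
Definition generates n (phi : psmat n) m (v : 'I_m -> psvec n) : Prop :=
  forall w : psvec n, is_psvec w ->
    exists (coef : 'I_m -> ps) (x : psvec n),
      (forall l, is_ps (coef l)) /\ is_psvec x /\
      forall c a, w c a = \sum_(l < m) ps_mul (coef l) (v l c) a
                          + mat_apply phi x c a.
Definition is_mu n (phi : psmat n) (mu : nat) : Prop :=
  (exists v : 'I_mu -> psvec n, (forall l, is_psvec (v l)) /\ generates phi v) /\
  forall m (v : 'I_m -> psvec n), (forall l, is_psvec (v l)) -> generates phi v ->
    (mu <= m)%N.

(* lambda(n^j M / n^(j+1) M).  This module is killed by n, so its length is  *)
(* its dimension over k = Q/n, i.e. the maximal size of a family of elements *)
(* w_1..w_m of n^j Q^n whose classes are k-linearly independent modulo      *)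
(* n^(j+1) Q^n + phi(Q^n).                                                   *)
Definition indep_mod n (phi : psmat n) (j : nat) m (w : 'I_m -> psvec n) : Prop :=
  forall (cf : 'I_m -> k) (x : psvec n), is_psvec x ->
    (forall c a, (a <= j)%N ->
        \sum_(l < m) cf l *: w l c a = mat_apply phi x c a) ->
    forall l, cf l = 0.
Definition good_family n (j : nat) m (w : 'I_m -> psvec n) : Prop :=
  forall l, is_psvec (w l) /\ forall c, in_maxpow j (w l c).
Definition is_graded_length n (phi : psmat n) (j len : nat) : Prop :=
  (exists w : 'I_len -> psvec n, good_family j w /\ indep_mod phi j w) /\
  forall m (w : 'I_m -> psvec n), good_family j w -> indep_mod phi j w ->
    (m <= len)%N.

Definition is_hilbert_series n (phi : psmat n) (H : nat -> nat) : Prop :=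
  forall j, is_graded_length phi j (H j).

End PS.

Definition polyser_eq (p : {poly int}) (H : nat -> nat) (h : {poly int}) : Prop :=
  forall j, \sum_(t < j.+1) p`_t * (H (j - t)%N)%:Z = h`_j.

(* h is the numerator h_M of the Hilbert series H: H = h/(1-z)^e with        *)
(* h(1) != 0 (the exponent e is then the pole order at z = 1, i.e. dim M).   *)
Definition is_hnum (H : nat -> nat) (h : {poly int}) : Prop :=
  exists e : nat, polyser_eq ((1 - 'X) ^+ e) H h /\ h.[1] != 0.

(* Main.v *)
Require Import Defs.
From HB Require Import structures.
From mathcomp Require Import all_boot all_order all_algebra.
From mathcomp Require Import mpoly.
Import Order.TTheory GRing.Theory Num.Theory.
Local Open Scope ring_scope.
Set Implicit Arguments. Unset Strict Implicit. Unset Printing Implicit Defensive.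
From mathcomp Require Import zify.
Definition indepU (K : fieldType) (V : vectType K) (U : {vspace V}) m (w : 'I_m -> V) :=
  forall cf : 'I_m -> K, (\sum_l cf l *: w l \in U) -> forall l, cf l = 0.

Lemma indepU_le (K : fieldType) (V : vectType K) (U : {vspace V}) m (w : 'I_m -> V) :
  indepU U w -> (m <= \dim (fullv : {vspace V}) - \dim U)%N.
Proof.
move=> hw; pose X := [tuple w l | l < m].
have hX (i : 'I_m) : X`_i = w i by rewrite -tnth_nth tnth_mktuple.
have fX : free X.
  apply/freeP => cf s0 i; apply: (hw cf).
  by rewrite (eq_bigr (fun l => cf l *: X`_l)) ?s0 ?mem0v // => l _; rewrite hX.
have dX : \dim <<X>> = m by rewrite (eqnP fX) size_tuple.
have cap0 : (<<X>> :&: U = 0)%VS.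
  apply/eqP; rewrite -subv0; apply/subvP => v /memv_capP [vX vU].
  rewrite memv0; move: vU; rewrite (coord_span vX) => vU.
  have c0 := hw (fun l => coord X l v).
  rewrite (eq_bigr (fun l => coord X l v *: X`_l)) in c0; last by move=> l _; rewrite hX.
  move: (c0 vU) => {}c0.
  by apply/eqP; apply: big1 => l _; rewrite c0 scale0r.
have := dimvS (subvf (<<X>> + U)%VS); rewrite dimv_disjoint_sum // dX.
by move=> h; rewrite leq_subRL ?(leq_trans _ h) ?leq_addl // addnC.
Qed.

Lemma indepU_ex (K : fieldType) (V : vectType K) (U : {vspace V}) :
  exists m, m = (\dim (fullv : {vspace V}) - \dim U)%N /\ exists w : 'I_m -> V, indepU U w.
Proof.
pose W := (U^C)%VS; pose b := vbasis W.
exists (\dim W); split; first by rewrite dimv_compl.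
exists (fun l => tnth b l) => cf hs.
have sW : \sum_l cf l *: tnth b l \in W.
  apply: memv_suml => l _; apply: memvZ; apply: vbasis_mem; exact: mem_tnth.
have s0 : \sum_l cf l *: tnth b l = 0.
  by apply/eqP; rewrite -memv0 -(capv_compl U); apply/memv_capP.
have := basis_free (vbasisP W); move/freeP => /(_ cf) h; apply: h.
by rewrite -[RHS]s0; apply: eq_bigr => l _; rewrite (tnth_nth 0).
Qed.
Definition conv (p : {poly int}) (f : nat -> int) (j : nat) : int :=
  \sum_(t < j.+1) p`_t * f (j - t)%N.

Definition Fp (f : nat -> int) (j : nat) : {poly int} := \poly_(t < j.+1) f t.

Lemma convE p f j a : (a <= j)%N -> conv p f a = (p * Fp f j)`_a.
Proof.
move=> aj; rewrite /conv coefM; apply: eq_bigr => t _.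
by rewrite coef_poly ltnS (leq_trans (leq_subr _ _) aj).
Qed.

Lemma eq_conv p f g j : (forall a, f a = g a) -> conv p f j = conv p g j.
Proof. by move=> h; apply: eq_bigr => t _; rewrite h. Qed.

Lemma conv_mul p q f j : conv (p * q) f j = conv p (conv q f) j.
Proof.
rewrite (convE _ _ (leqnn j)) -mulrA coefM /conv; apply: eq_bigr => t _.
by rewrite -(convE q f (leq_subr t j)).
Qed.

Lemma convB p f g j : conv p (fun a => f a - g a) j = conv p f j - conv p g j.
Proof. by rewrite /conv -sumrB; apply: eq_bigr => t _; rewrite mulrBr. Qed.

Lemma convZ p (c : int) f j : conv p (fun a => c * f a) j = c * conv p f j.
Proof. by rewrite /conv mulr_sumr; apply: eq_bigr => t _; rewrite mulrCA. Qed.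


Lemma conv_X' i g j : conv ('X^i) g j = if (i <= j)%N then g (j - i)%N else 0.
Proof.
rewrite (convE _ _ (leqnn j)) coefXnM.
case: ltnP => h //; by rewrite coef_poly ltnS leq_subr.
Qed.

Lemma conv_1 g j : conv 1 g j = g j.
Proof. by rewrite -(expr0 'X) conv_X' subn0. Qed.

Lemma conv_1mX g j : conv (1 - 'X) g j = g j - (if (0 < j)%N then g j.-1 else 0).
Proof.
rewrite (convE _ _ (leqnn j)) mulrBl mul1r coefB -['X]expr1 coefXnM.
rewrite coef_poly ltnSn; case: j => [|j] /=; first by [].
by rewrite coef_poly subn1 /= ltnS leqnSn.
Qed.

Definition Aser (d j : nat) : int := ('C(j + d, j))%:Z.

Lemma conv_Aser d j : conv ((1 - 'X) ^+ d) (Aser d) j = 1.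
Proof.
elim: d j => [|d IH] j.
  by rewrite expr0 conv_1 /Aser addn0 binn.
rewrite exprSr conv_mul -(IH j); apply: eq_conv => a.
rewrite conv_1mX /Aser; case: a => [|a] /=; first by rewrite !bin0 subr0.
rewrite addSn (addnS a d) binS PoszD addrK //.
Qed.

Definition Gser (n i d j : nat) : int :=
  n%:Z * (Aser d j - (if (i <= j)%N then Aser d (j - i) else 0)).

Lemma conv_Gser n i d j :
  conv ((1 - 'X) ^+ d) (Gser n i d) j = if (j < i)%N then n%:Z else 0.
Proof.
rewrite /Gser convZ convB conv_Aser.
have -> : conv ((1 - 'X) ^+ d) (fun a => if (i <= a)%N then Aser d (a - i) else 0) j
   = conv ((1 - 'X) ^+ d) (conv ('X^i) (Aser d)) j.
  by apply: eq_conv => a; rewrite conv_X'.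
rewrite -conv_mul [_ * 'X^i]mulrC conv_mul conv_X'.
case: ltnP => h; first by rewrite subr0 mulr1.
by rewrite conv_Aser subrr mulr0.
Qed.
Lemma homog_ofP (k : fieldType) (d e : nat) (p : mp k d) :
  homog_of e p <-> p \is e.-homog.
Proof.
split=> [h|h m ne]; last exact: (dhomog_nemf_coeff h ne).
apply/dhomogP => m; rewrite mcoeff_msupp => nz; apply/eqP; apply: contraR nz => ne.
by rewrite (h m ne).
Qed.

Lemma pihomogM (k : fieldType) (d i t : nat) (p q : mp k d) :
  p \is i.-homog -> pihomog mdeg (t + i) (p * q) = p * pihomog mdeg t q.
Proof.
move=> hp.
have hk : (mmeasure mdeg q <= maxn (mmeasure mdeg q) t.+1)%N by rewrite leq_maxl.
rewrite {1}(pihomog_partitionE hk) mulr_sumr linear_sum /=.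
have tk : (t < maxn (mmeasure mdeg q) t.+1)%N by rewrite leq_max ltnSn orbT.
rewrite (bigD1 (Ordinal tk)) //= big1 ?addr0.
  by rewrite pihomog_dE // addnC; apply: dhomogM => //; apply: pihomogP.
move=> e /eqP ne; apply: (pihomog_ne0 (d := (i + e)%N)).
  by rewrite addnC eqn_add2r; apply/eqP => h; apply: ne; apply: val_inj.
by apply: dhomogM => //; apply: pihomogP.
Qed.

Lemma homog_sum_prod (k : fieldType) (d n i j : nat) (f g : 'I_n -> mp k d) :
  (forall c, f c \is i.-homog) -> (forall c, g c \is j.-homog) ->
  \sum_c f c * g c \is (i + j)%N.-homog.
Proof.
move=> hf hg; apply: rpred_sum => c _; exact: dhomogM.
Qed.

Lemma mat_applyE (k : fieldType) d n (phi : psmat k d n) x r a :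
  mat_apply phi x r a = \sum_(c < n) \sum_(b < a.+1) phi r c b * x c (a - b)%N.
Proof. by []. Qed.

Lemma mat_apply_low (k : fieldType) d n (phi : psmat k d n) i (x : psvec k d n) T :
  all_in_maxpow phi i -> (forall c t, (t < T)%N -> x c t = 0) ->
  forall r a, (a < T + i)%N -> mat_apply phi x r a = 0.
Proof.
move=> hphi hx r a ha; rewrite mat_applyE big1 // => c _; rewrite big1 // => b _.
case: (ltnP b i) => hb; first by rewrite (hphi r c b hb) mul0r.
rewrite hx ?mulr0 //; have := ltn_ord b; lia.
Qed.

Lemma mat_apply_at (k : fieldType) d n (phi : psmat k d n) i (x : psvec k d n) T :
  all_in_maxpow phi i -> (forall c t, (t < T)%N -> x c t = 0) ->
  forall r, mat_apply phi x r (T + i)%N = \sum_c phi r c i * x c T.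
Proof.
move=> hphi hx r; rewrite mat_applyE; apply: eq_bigr => c _.
have hi : (i < (T + i).+1)%N by lia.
rewrite (bigD1 (Ordinal hi)) //= big1 ?addr0; first by rewrite addnK.
move=> b /eqP ne; case: (ltnP b i) => hb; first by rewrite (hphi r c b hb) mul0r.
have hb' : (i < b)%N by rewrite ltn_neqAle hb andbT; apply/eqP => e; apply: ne; apply: val_inj.
rewrite hx ?mulr0 //; have := ltn_ord b; lia.
Qed.

Definition Kcond (k : fieldType) d n (phi : psmat k d n) i j :=
  forall t, (t < j - i)%N -> forall y : 'I_n -> mp k d, (forall c, homog_of t (y c)) ->
    (forall r, \sum_c phi r c i * y c = 0) -> forall c, y c = 0.

Lemma Ij_lemma (k : fieldType) d n (phi : psmat k d n) i j (x : psvec k d n) :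
  all_in_maxpow phi i -> Kcond phi i j -> is_psvec x -> (i <= j)%N ->
  (forall r a, (a < j)%N -> mat_apply phi x r a = 0) ->
  (forall c t, (t < j - i)%N -> x c t = 0) /\
  (forall r, mat_apply phi x r j = \sum_c phi r c i * x c (j - i)%N).
Proof.
move=> hphi hK hx hij hlow.
have P : forall T, (T <= j - i)%N -> forall c t, (t < T)%N -> x c t = 0.
  elim=> [|T IH] hT c t ht //.
  rewrite ltnS leq_eqVlt in ht; case/orP: ht => [/eqP ->|ht]; last by apply: IH => //; lia.
  apply: (hK T _ (fun c => x c T)); [lia | by move=> c'; apply: hx | ].
  move=> r /=; rewrite -(mat_apply_at hphi (IH (ltnW hT)) r).
  by apply: hlow; lia.
split; first exact: P.
by move=> r; rewrite -(mat_apply_at hphi (P _ (leqnn _)) r) subnK.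
Qed.
Definition Fsp (k : fieldType) d n t := {ffun 'I_n -> dhomog d.+1 k t}.

Lemma val_indhomog (k : fieldType) d t (p : mp k d) :
  p \is t.-homog -> val (indhomog t p : dhomog d.+1 k t) = p.
Proof. by move=> h; rewrite /indhomog insubdK. Qed.

Definition phiv (k : fieldType) d n (phi : psmat k d n) i j (y : Fsp k d n (j - i)) : Fsp k d n j :=
  [ffun r => indhomog j (pihomog mdeg j (\sum_c phi r c i * val (y c)))].

Arguments phiv {k d n} phi i j y.

Lemma phiv_val (k : fieldType) d n (phi : psmat k d n) i j y r :
  (forall r c, phi r c i \is i.-homog) ->
  val (phiv phi i j y r) = if (i <= j)%N then \sum_c phi r c i * val (y c) else 0.
Proof.
move=> hphi; rewrite ffunE val_indhomog ?pihomogP //; case: ifP => h; last first.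
  apply: (pihomog_ne0 (d := i)); first by apply/eqP => e; move: h; rewrite e leqnn.
  apply: rpred_sum => c _; have H := dhomogM (hphi r c) (dhomog_is_dhomog (y c)).
  have e : (i + (j - i))%N = i by move/negbT: h; rewrite -ltnNge => /ltnW; rewrite -subn_eq0 => /eqP ->; rewrite addn0.
  by rewrite e in H.
apply: pihomog_dE.
have H : \sum_c phi r c i * val (y c) \is (i + (j - i))%N.-homog.
  by apply: rpred_sum => c _; apply: dhomogM; [exact: hphi | exact: dhomog_is_dhomog].
by rewrite (subnKC h) in H.
Qed.

Lemma val_lin (k : fieldType) d t (a : k) (u v : dhomog d.+1 k t) :
  val (a *: u + v) = a *: val u + val v.
Proof. by []. Qed.

Lemma val_sum (k : fieldType) d t m (f : 'I_m -> dhomog d.+1 k t) :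
  val (\sum_l f l) = \sum_l val (f l).
Proof. by apply: (big_morph val) => // u v. Qed.

Lemma phiv_lin (k : fieldType) d n (phi : psmat k d n) i j : linear (phiv phi i j).
Proof.
move=> a y z; apply/ffunP => r; apply: val_inj.
rewrite !ffunE val_lin !val_indhomog ?pihomogP // -linearP /=; congr pihomog.
rewrite scaler_sumr -big_split /=; apply: eq_bigr => c _.
by rewrite !ffunE val_lin mulrDr scalerAr.
Qed.

HB.instance Definition _ (k : fieldType) d n (phi : psmat k d n) i j :=
  GRing.isLinear.Build k (Fsp k d n (j - i)) (Fsp k d n j) _ (phiv phi i j) (@phiv_lin k d n phi i j).

Definition Phi (k : fieldType) d n (phi : psmat k d n) i j : 'Hom(Fsp k d n (j - i), Fsp k d n j) :=
  linfun (phiv phi i j).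
Lemma val_scale (k : fieldType) d t (a : k) (u : dhomog d.+1 k t) :
  val (a *: u) = a *: val u.
Proof. by []. Qed.

Lemma graded_len (k : fieldType) d n (phi : psmat k d n) i j :
  is_psmat phi -> all_in_maxpow phi i -> Kcond phi i j ->
  is_graded_length phi j (\dim (fullv : {vspace Fsp k d n j}) - \dim (limg (Phi phi i j)))%N.
Proof.
move=> hps hphi0 hK.
have hphi : forall r c, phi r c i \is i.-homog by move=> r c; apply/homog_ofP; apply: hps.
have [m [em [w hw]]] := indepU_ex (limg (Phi phi i j)); rewrite -em.
split.
  exists (fun l c a => if a == j then val (w l c) else 0); split.
    move=> l; split.
      move=> c a; case: eqP => [->|_]; first by apply/homog_ofP; exact: dhomog_is_dhomog.
      by move=> mm _; rewrite mcoeff0.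
    by move=> c a ha; rewrite ifN // neq_ltn ha.
  move=> cf x hx heq; apply: hw.
  have low : forall r a, (a < j)%N -> mat_apply phi x r a = 0.
    move=> r a ha; rewrite -heq ?(ltnW ha) // big1 // => l _.
    by rewrite ifN ?scaler0 // neq_ltn ha.
  have atj : forall r, \sum_l cf l *: val (w l r) = mat_apply phi x r j.
    by move=> r; rewrite -heq //; apply: eq_bigr => l _; rewrite eqxx.
  case: (leqP i j) => hij.
    have [_ hj] := Ij_lemma hphi0 hK hx hij low.
    apply/memv_imgP; exists [ffun c => indhomog (j - i) (x c (j - i)%N)]; first exact: memvf.
    apply/ffunP => r; apply: val_inj.
    rewrite lfunE /= phiv_val // hij sum_ffunE val_sum.
    rewrite (eq_bigr (fun l => cf l *: val (w l r))); last by move=> l _; rewrite ffunE.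
    rewrite atj hj; apply: eq_bigr => c _; rewrite ffunE val_indhomog //.
    by apply/homog_ofP; apply: hx.
  have -> : \sum_l cf l *: w l = 0; last exact: mem0v.
  apply/ffunP => r; apply: val_inj; rewrite sum_ffunE val_sum ffunE /=.
  rewrite (eq_bigr (fun l => cf l *: val (w l r))); last by move=> l _; rewrite ffunE.
  by rewrite atj (@mat_apply_low _ _ _ phi i x 0) // => c t.
move=> m' w' hgood hind.
rewrite em; apply: (@indepU_le k (Fsp k d n j) (limg (Phi phi i j)) m' (fun l => [ffun c => indhomog j (w' l c j)])).
move=> cf /memv_imgP [y _ hy].
have vw : forall l c, val (indhomog j (w' l c j) : dhomog d.+1 k j) = w' l c j.
  by move=> l c; rewrite val_indhomog //; apply/homog_ofP; apply: (hgood l).1.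
have hs : forall c, val ((\sum_l cf l *: [ffun c => indhomog j (w' l c j)]) c)
    = \sum_l cf l *: w' l c j.
  move=> c; rewrite sum_ffunE val_sum; apply: eq_bigr => l _.
  by rewrite ffunE val_scale ffunE vw.
have hs2 : forall c, \sum_l cf l *: w' l c j = val (phiv phi i j y c).
  by move=> c; rewrite -hs hy lfunE.
case: (leqP i j) => hij.
  pose x : psvec k d n := fun c a => if a == (j - i)%N then val (y c) else 0.
  have xlow : forall c t, (t < j - i)%N -> x c t = 0.
    by move=> c t ht; rewrite /x ifN // neq_ltn ht.
  apply: (hind cf x).
    move=> c a; rewrite /x; case: eqP => [->|_]; first by apply/homog_ofP; exact: dhomog_is_dhomog.
    by move=> mm _; rewrite mcoeff0.
  move=> c a ha; case: (ltngtP a j) (ha) => // [altj|->] _.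
    rewrite big1; last by move=> l _; rewrite ((hgood l).2 c a altj) scaler0.
    by rewrite (mat_apply_low hphi0 xlow) // subnK.
  have := mat_apply_at hphi0 xlow c; rewrite subnK // => ->.
  rewrite hs2 phiv_val // hij; apply: eq_bigr => c' _; by rewrite /x eqxx.
apply: (hind cf (fun _ _ => 0)).
  by move=> c a mm _; rewrite mcoeff0.
move=> c a ha; rewrite mat_applyE [RHS]big1; last by move=> c' _; rewrite big1 // => b _; rewrite mulr0.
case: (ltngtP a j) (ha) => // [altj|->] _.
  by rewrite big1 // => l _; rewrite ((hgood l).2 c a altj) scaler0.
by rewrite hs2 phiv_val // leqNgt hij.
Qed.

Lemma graded_len_uniq (k : fieldType) d n (phi : psmat k d n) j L1 L2 :
  is_graded_length phi j L1 -> is_graded_length phi j L2 -> L1 = L2.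
Proof.
move=> [[w1 [g1 i1]] h1] [[w2 [g2 i2]] h2].
by apply/eqP; rewrite eqn_leq (h2 _ _ g1 i1) (h1 _ _ g2 i2).
Qed.
Lemma dimF (k : fieldType) d n t :
  \dim (fullv : {vspace Fsp k d n t}) = (n * 'C(t + d, t))%N.
Proof. by rewrite dimvf /dim /= card_ord. Qed.

Definition Kpoly (k : fieldType) d n (phi : psmat k d n) i t :=
  forall y : 'I_n -> mp k d, (forall c, homog_of t (y c)) ->
    (forall r, \sum_c phi r c i * y c = 0) -> forall c, y c = 0.

Lemma lker_Phi0 (k : fieldType) d n (phi : psmat k d n) i j :
  is_psmat phi -> (i <= j)%N -> Kpoly phi i (j - i) -> lker (Phi phi i j) = 0%VS.
Proof.
move=> hps hij hK.
have hphi : forall r c, phi r c i \is i.-homog by move=> r c; apply/homog_ofP; apply: hps.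
apply/eqP; rewrite -subv0; apply/subvP => v; rewrite memv_ker memv0 lfunE /= => /eqP hv.
apply/eqP/ffunP => c; apply: val_inj; rewrite ffunE /=.
apply: (hK (fun c => val (v c))) => [c'|r].
  by apply/homog_ofP; exact: dhomog_is_dhomog.
by have := congr1 (fun f : Fsp k d n j => val (f r)) hv; rewrite phiv_val // hij ffunE.
Qed.

Lemma dim_limg_inj (k : fieldType) d n (phi : psmat k d n) i j :
  is_psmat phi -> (i <= j)%N -> Kpoly phi i (j - i) ->
  \dim (limg (Phi phi i j)) = (n * 'C(j - i + d, j - i))%N.
Proof.
move=> hps hij hK; rewrite -(dimF k d n (j - i)); apply: limg_dim_eq.
by rewrite lker_Phi0 // capv0.
Qed.

Lemma dim_limg_low (k : fieldType) d n (phi : psmat k d n) i j :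
  is_psmat phi -> (j < i)%N -> \dim (limg (Phi phi i j)) = 0%N.
Proof.
move=> hps hij.
have hphi : forall r c, phi r c i \is i.-homog by move=> r c; apply/homog_ofP; apply: hps.
apply/eqP; rewrite dimv_eq0 -subv0; apply/subvP => v /memv_imgP [y _ ->].
rewrite memv0; apply/eqP/ffunP => r; apply: val_inj.
by rewrite lfunE /= phiv_val // leqNgt hij ffunE.
Qed.

Lemma dim_limg_lt (k : fieldType) d n (phi : psmat k d n) i j (y : 'I_n -> mp k d) c0 :
  is_psmat phi -> (i <= j)%N -> (forall c, homog_of (j - i) (y c)) ->
  (forall r, \sum_c phi r c i * y c = 0) -> y c0 != 0 ->
  (\dim (limg (Phi phi i j)) < n * 'C(j - i + d, j - i))%N.
Proof.
move=> hps hij hy hk nz.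
have hphi : forall r c, phi r c i \is i.-homog by move=> r c; apply/homog_ofP; apply: hps.
pose v : Fsp k d n (j - i) := [ffun c => indhomog (j - i) (y c)].
have vv : forall c, val (v c) = y c by move=> c; rewrite ffunE val_indhomog //; apply/homog_ofP.
have vk : v \in lker (Phi phi i j).
  rewrite memv_ker lfunE /=; apply/eqP/ffunP => r; apply: val_inj.
  rewrite phiv_val // hij ffunE /= -[RHS](hk r); apply: eq_bigr => c _; by rewrite vv.
have v0 : v != 0.
  by apply: contraNneq nz => e; rewrite -vv e ffunE.
rewrite -(dimF k d n (j - i)) -(limg_ker_dim (Phi phi i j) fullv) capfv -add1n leq_add2r.
rewrite lt0n dimv_eq0; apply/eqP => e; move: vk; rewrite e memv0 => /eqP e2; by rewrite e2 eqxx in v0.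
Qed.
Definition ebas (k : fieldType) d n (l : 'I_n) : psvec k d n :=
  fun c a => if (a == 0%N) && (c == l) then 1 else 0.

Lemma homog0C (k : fieldType) d (p : mp k d) : homog_of 0 p -> p = (p@_0%MM)%:MP.
Proof.
move=> h; apply/mpolyP => m; rewrite mcoeffC.
case: (eqVneq m 0%MM) => [->|ne]; first by rewrite mulr1.
by rewrite mulr0 h // mdeg_eq0.
Qed.

Lemma ebas_ps (k : fieldType) d n l : is_psvec (@ebas k d n l).
Proof.
move=> c a m; rewrite /ebas; case: ifP => [/andP [/eqP -> _]|_]; last by rewrite mcoeff0.
by rewrite mcoeff1 mdeg_eq0 => /negbTE ->.
Qed.

Lemma mat_apply0 (k : fieldType) d n (phi : psmat k d n) r a :
  mat_apply phi (fun _ _ => 0) r a = 0.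
Proof. by rewrite mat_applyE big1 // => c _; rewrite big1 // => b _; rewrite mulr0. Qed.

Lemma mu_le (k : fieldType) d n (phi : psmat k d n) mu : is_mu phi mu -> (mu <= n)%N.
Proof.
move=> [_ hmin]; apply: (hmin n (@ebas k d n)); first by move=> l; apply: (@ebas_ps k d n).
move=> w hw; exists w, (fun _ _ => 0); split; first by move=> l; apply: hw.
split; first by move=> c a mm _; rewrite mcoeff0.
move=> c a; rewrite mat_apply0 addr0 (bigD1 c) //= big1 ?addr0.
  rewrite /ps_mul big_ord_recr /= subnn /ebas eqxx /= mulr1 big1 ?add0r // => b _.
  by rewrite ifN ?mulr0 // andbT subn_eq0 -ltnNge.
move=> l ne; rewrite /ps_mul big1 // => b _; rewrite /ebas.
by rewrite [c == l]eq_sym (negbTE ne) andbF mulr0.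
Qed.

Lemma mu_ge (k : fieldType) d n (phi : psmat k d n) mu :
  minimal_pres phi -> is_mu phi mu -> (n <= mu)%N.
Proof.
move=> hmin [[v [hv hgen]] _].
pose V : 'M[k]_(mu, n) := \matrix_(l, c) (v l c 0%N)@_0%MM.
have sub : (1%:M <= V)%MS.
  apply/row_subP => c0.
  have [coef [x [hc [hx heq]]]] := hgen (@ebas k d n c0) (@ebas_ps k d n c0).
  have -> : row c0 (1%:M : 'M[k]_n) = (\row_l (coef l 0%N)@_0%MM) *m V.
    apply/rowP => c; rewrite !mxE.
    have := congr1 (mcoeff 0%MM) (heq c 0%N).
    have -> : mat_apply phi x c 0%N = 0.
      by rewrite mat_applyE big1 // => c' _; rewrite big_ord1 (hmin c c' 0%N) // mul0r.
    rewrite /ebas eqxx /= addr0 raddf_sum /= => e.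
    transitivity ((if c == c0 then 1 else 0 : mp k d)@_0%MM).
      by rewrite eq_sym; case: eqP => _; rewrite ?mcoeff1 ?mcoeff0 ?eqxx.
    rewrite e; apply: eq_bigr => l _; rewrite /ps_mul big_ord1 !mxE subnn.
    by rewrite [coef l 0%N]homog0C ?mcoeffCM ?mcoeffC ?eqxx ?mulr1 //; apply: hc.
  exact: submxMl.
have := mxrankS sub; rewrite mxrank1 => h; exact: (leq_trans h (rank_leq_row V)).
Qed.

Lemma mu_eq (k : fieldType) d n (phi : psmat k d n) mu :
  minimal_pres phi -> is_mu phi mu -> mu = n.
Proof. by move=> hm hmu; apply/eqP; rewrite eqn_leq (mu_le hmu) (mu_ge hm hmu). Qed.
From Stdlib Require Import Classical.

Lemma det_Kpoly (k : fieldType) d n (phi : psmat k d n) i t :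
  \det (hcomp phi i) != 0 -> Kpoly phi i t.
Proof.
move=> hdet y _ hy c.
pose A := hcomp phi i; pose Y : 'cV[mp k d]_n := \col_c y c.
have AY : A *m Y = 0.
  apply/colP => r; rewrite !mxE -[RHS](hy r); apply: eq_bigr => c' _; by rewrite !mxE.
have := congr1 (fun M => (\adj A *m M) c 0) AY.
rewrite mulmxA mul_adj_mx mul_scalar_mx mulmx0 !mxE => /eqP.
by rewrite mulf_eq0 (negbTE hdet) /= => /eqP.
Qed.

Definition NK (k : fieldType) d n (phi : psmat k d n) i t :=
  exists y : 'I_n -> mp k d, (forall c, homog_of t (y c)) /\
    (forall r, \sum_c phi r c i * y c = 0) /\ exists c0, y c0 != 0.

Lemma notNK_Kpoly (k : fieldType) d n (phi : psmat k d n) i t :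
  ~ NK phi i t -> Kpoly phi i t.
Proof.
move=> h y hy hk c; apply: NNPP => hc; apply: h; exists y; split=> //; split=> //.
by exists c; apply/eqP.
Qed.

Lemma det0_NK (k : fieldType) d n (phi : psmat k d n) i :
  is_psmat phi -> \det (hcomp phi i) = 0 -> exists t, NK phi i t.
Proof.
move=> hps hdet.
have hphi : forall r c, phi r c i \is i.-homog by move=> r c; apply/homog_ofP; apply: hps.
have : \det (hcomp phi i)^T == 0 by rewrite det_tr hdet.
case/det0P => v nz hv.
have [c0 hc0] : exists c0, v 0 c0 != 0.
  apply: NNPP => h; apply/negP: nz; rewrite negbK; apply/eqP/rowP => c.
  rewrite mxE; apply/eqP; apply: NNPP => h2; apply: h; exists c; exact/negP.
have ker : forall r, \sum_c phi r c i * v 0 c = 0.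
  move=> r; have := congr1 (fun M : 'M[mp k d]_(1, n) => M 0 r) hv; rewrite !mxE => e; apply: etrans _ e.
  by apply: eq_bigr => c _; rewrite !mxE mulrC.
have [t ht] : exists t, pihomog mdeg t (v 0 c0) != 0.
  apply: NNPP => h; apply/negP: hc0; rewrite negbK.
  rewrite (pihomog_partitionE (leqnn (mmeasure mdeg (v 0 c0)))) big1 // => t _.
  apply/eqP; apply: NNPP => h2; apply: h; exists t; exact/negP.
exists t, (fun c => pihomog mdeg t (v 0 c)); split.
  by move=> c; apply/homog_ofP; apply: pihomogP.
split; last by exists c0.
move=> r; transitivity (pihomog mdeg (t + i)%N (\sum_c phi r c i * v 0 c)); last by rewrite ker linear0.
rewrite linear_sum /=; apply: eq_bigr => c _; by rewrite pihomogM.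
Qed.

Lemma min_ex (P : nat -> Prop) : (exists t, P t) -> exists s, P s /\ forall t, (t < s)%N -> ~ P t.
Proof.
move=> [t ht].
have : forall N t, (t <= N)%N -> P t -> exists s, P s /\ forall t, (t < s)%N -> ~ P t.
  elim=> [|N IH] t' ht' hP.
    by exists t'; split=> // t2; move: ht'; rewrite leqn0 => /eqP ->.
  case: (classic (exists t2, (t2 < t')%N /\ P t2)) => [[t2 [h1 h2]]|hno].
    by apply: (IH t2) => //; rewrite -ltnS (leq_trans h1).
  by exists t'; split=> // t2 h1 h2; apply: hno; exists t2.
by move/(_ t t (leqnn t) ht).
Qed.

Lemma Hformula (k : fieldType) d n (phi : psmat k d n) i (H : nat -> nat) j :
  is_psmat phi -> all_in_maxpow phi i -> is_hilbert_series phi H ->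
  Kcond phi i j -> ((i <= j)%N -> Kpoly phi i (j - i)) ->
  (H j)%:Z = Gser n i d j.
Proof.
move=> hps hphi0 hH hK hK2.
have -> := graded_len_uniq (hH j) (graded_len hps hphi0 hK).
rewrite -subzn; last exact: dimvS (subvf _).
rewrite dimF /Gser /Aser.
case: (leqP i j) => hij.
  by rewrite dim_limg_inj //; [rewrite (@mulrBr int) | exact: hK2].
by rewrite dim_limg_low // !subr0.
Qed.

From Stdlib Require Import Classical.

Lemma conv_single p f j : (forall a, (a < j)%N -> f a = 0) -> conv p f j = p`_0 * f j.
Proof.
move=> h; rewrite /conv big_ord_recl subn0 big1 ?addr0 // => t _.
rewrite h ?mulr0 //=; have := ltn_ord t; rewrite /bump leq0n add1n; lia.
Qed.

Lemma coef_h (mu iM j : nat) :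
  ((mu%:R : int) *: \sum_(t < iM) 'X^t : {poly int})`_j = if (j < iM)%N then mu%:Z else 0.
Proof.
have -> : \sum_(t < iM) 'X^t = \poly_(t < iM) (1 : int).
  by rewrite poly_def; apply: eq_bigr => t _; rewrite scale1r.
by rewrite coefZ coef_poly; case: ifP; rewrite ?mulr1 ?mulr0 // natz.
Qed.

Lemma horner_h (mu iM : nat) :
  ((mu%:R : int) *: \sum_(t < iM) 'X^t : {poly int}).[1] = (mu * iM)%:R.
Proof.
rewrite hornerZ horner_sum (eq_bigr (fun _ => 1)); last by move=> t _; rewrite hornerXn expr1n.
by rewrite sumr_const card_ord natrM.
Qed.

Lemma coef_1mX_0 e : ((1 - 'X) ^+ e : {poly int})`_0 = 1.
Proof. by rewrite -horner_coef0 !hornerE expr1n. Qed.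

Lemma coef_1mX_1 e : ((1 - 'X) ^+ e : {poly int})`_1 = - e%:Z.
Proof.
elim: e => [|e IH]; first by rewrite expr0 coef1.
rewrite exprSr mulrBr mulr1 coefB coefMX /= IH coef_1mX_0.
by rewrite -opprD -addn1 PoszD.
Qed.

Lemma phi_nz (k : fieldType) d n (phi : psmat k d n) i :
  is_iM phi i -> exists r c, phi r c i != 0.
Proof.
move=> [hi hmax]; apply: NNPP => h.
have : all_in_maxpow phi i.+1.
  move=> r c a ha; rewrite ltnS leq_eqVlt in ha; case/orP: ha => [/eqP ->|ha]; last exact: hi.
  apply/eqP; apply: NNPP => h2; apply: h; exists r, c; exact/negP.
by move/hmax; rewrite ltnn.
Qed.

Lemma dim_limg_pos (k : fieldType) d n (phi : psmat k d n) i :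
  is_psmat phi -> (exists r c, phi r c i != 0) -> (0 < \dim (limg (Phi phi i i)))%N.
Proof.
move=> hps [r [c hrc]].
have hphi : forall r c, phi r c i \is i.-homog by move=> r' c'; apply/homog_ofP; apply: hps.
have hh : forall c', (if c' == c then 1 else 0 : mp k d) \is (i - i)%N.-homog.
  by move=> c'; rewrite subnn; case: ifP => _; [exact: dhomog1 | exact: dhomog0].
pose v : Fsp k d n (i - i) := [ffun c' => indhomog (i - i) (if c' == c then 1 else 0)].
have Pv : val (Phi phi i i v r) = phi r c i.
  rewrite lfunE /= phiv_val // leqnn (bigD1 c) //= ffunE val_indhomog // eqxx mulr1.
  rewrite big1 ?addr0 // => c' ne; rewrite ffunE val_indhomog // (negbTE ne) mulr0 //.
have mv : Phi phi i i v \in limg (Phi phi i i) by apply: memv_img; apply: memvf.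
rewrite lt0n dimv_eq0; apply/eqP => e; move: mv; rewrite e memv0 => /eqP e2.
by move: Pv; rewrite e2 ffunE => e3; move: hrc; rewrite -e3 eqxx.
Qed.

Lemma int_nat_eq (a b c : nat) : a%:Z - b%:Z = c%:Z -> a = (c + b)%N.
Proof. by move/eqP; rewrite subr_eq -PoszD => /eqP [->]. Qed.

Unset Implicit Arguments.

Theorem proposition4p10 (k : fieldType) (d n : nat) (phi : psmat k d n)
    (iM mu : nat) (H : nat -> nat) :
  (0 < n)%N ->
  is_psmat phi ->
  ps_injective phi ->
  minimal_pres phi ->
  is_iM phi iM ->
  is_mu phi mu ->
  is_hilbert_series phi H ->
  (\det (hcomp phi iM) != 0 <->
   is_hnum H (mu%:R *: \sum_(t < iM) 'X^t)).
Proof.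
move=> hn hps hinj hmin hiMM hmu hH.
have [hiM hmax] := hiMM.
have mun := mu_eq hmin hmu.
have i1 : (1 <= iM)%N := hmax 1%N hmin.
split.
  move=> hdet.
  have KP := fun t => @det_Kpoly k d n phi iM t hdet.
  have HG : forall j, (H j)%:Z = Gser n iM d j.
    by move=> j; apply: Hformula => // t _; exact: KP.
  exists d; split.
    move=> j; rewrite coef_h mun.
    have := conv_Gser n iM d j; rewrite /conv => <-.
    by apply: eq_bigr => t _; rewrite HG.
  by rewrite horner_h mun pnatr_eq0 -lt0n muln_gt0 hn.
move=> [e [hpe _]]; apply/eqP => hdet.
have [t0 ht0] := det0_NK hps hdet.
have [s [[y [hy [hk [c0 hc0]]]] hmin_s]] := @min_ex (NK phi iM) (ex_intro _ t0 ht0).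
have Kp : forall t, (t < s)%N -> Kpoly phi iM t.
  by move=> t ht; apply: notNK_Kpoly; apply: hmin_s.
have HG : forall j, (j < s + iM)%N -> (H j)%:Z = Gser n iM d j.
  move=> j hj; apply: Hformula => //; [move=> t ht; apply: Kp; lia | move=> hij; apply: Kp; lia].
have hpe' : forall j, conv ((1 - 'X) ^+ e) (fun a => (H a)%:Z) j = if (j < iM)%N then n%:Z else 0.
  by move=> j; rewrite -mun -coef_h; exact: hpe j.
have H0 : (H 0%N)%:Z = n%:Z.
  have := hpe' 0%N; rewrite /conv big_ord1 coef_1mX_0 mul1r => ->; by rewrite i1.
have E1 : (H 1%N)%:Z - (e * n)%N%:Z = Posz (if (1 < iM)%N then n else 0%N).
  have := hpe' 1%N; rewrite /conv big_ord_recl big_ord1 /= coef_1mX_0 coef_1mX_1 mul1r.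
  by rewrite H0 mulNr => ->; case: ifP.
have Kc : forall j, (j <= s + iM)%N -> Kcond phi iM j.
  by move=> j hj t ht; apply: Kp; lia.
have Hj : forall j, (j <= s + iM)%N -> H j = (\dim (fullv : {vspace Fsp k d n j}) - \dim (limg (Phi phi iM j)))%N.
  by move=> j hj; apply: graded_len_uniq (hH j) (graded_len hps hiM (Kc j hj)).
have Lle : forall j, (\dim (limg (Phi phi iM j)) <= \dim (fullv : {vspace Fsp k d n j}))%N.
  by move=> j; apply: dimvS; apply: subvf.
case: (ltnP 1 (s + iM)) => hsi.
  have e_d : e = d.
    have := HG 1%N hsi; rewrite /Gser /Aser bin1.
    have E1' := int_nat_eq E1.
    case: (ltnP 1 iM) => hi.
      rewrite subr0 -PoszM => [[HG1]].
      rewrite hi in E1'.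
      apply/eqP; rewrite -(eqn_pmul2l hn); apply/eqP; nia.
    have iM1 : iM = 1%N by lia.
    rewrite iM1 /= in E1' *.
    rewrite subnn bin0 subzn ?leq_addr // -PoszM => [[HG1]].
    apply/eqP; rewrite -(eqn_pmul2l hn); apply/eqP; nia.
  rewrite e_d in hpe'.
  have hy' : forall c, homog_of (s + iM - iM) (y c) by move=> c; rewrite addnK.
  have lt := dim_limg_lt hps (leq_addl s iM) hy' hk hc0.
  set L := \dim (limg (Phi phi iM (s + iM))) in lt *; rewrite addnK in lt.
  have := convB ((1 - 'X) ^+ d) (fun a => (H a)%:Z) (Gser n iM d) (s + iM).
  rewrite hpe' conv_Gser subrr conv_single ?coef_1mX_0 ?mul1r; last first.
    by move=> a ha; rewrite HG // subrr.
  move/eqP; rewrite subr_eq0 => /eqP HGs.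
  rewrite Hj // -/L -subzn ?Lle // dimF /Gser /Aser leq_addl addnK in HGs.
  move: HGs; rewrite (@mulrBr int) -!PoszM => /addrI /oppr_inj [HL].
  by move: lt; rewrite HL ltnn.
have s0 : s = 0%N by lia.
have iM1 : iM = 1%N by lia.
subst s iM.
have Lpos := dim_limg_pos hps (phi_nz hiMM).
have lt := dim_limg_lt hps (leqnn 1) hy hk hc0.
have E1' := int_nat_eq E1.
have L1 := Lle 1%N.
rewrite Hj // dimF bin1 /= in E1' L1.
move: lt Lpos E1' L1; rewrite bin0 muln1.
set L := \dim (limg (Phi phi 1 1)) => lt Lpos E L1.
case: (leqP e d) => he; nia.
Qed.
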